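(* For $\psi=\log$ one has $\frac12\le C_{\log}\le1$, and for $\psi=\sqrt{\cdot}$ one has $C_{\sqrt{\cdot}}=0$.
   Context: For $\psi\in C^1((0,\infty))$ and $x,y>0$, $\widetilde{\psi}(x,y):=[\psi'(x)+\psi'(y)](1-xy)+x[\psi(y)-\psi(1/x)]+y[\psi(x)-\psi(1/y)]$, and $C_\psi:=\inf\frac{\widetilde{\psi}(x,y)}{(\psi(x)+\psi(y)-2\psi(1))^2}$, the infimum taken over all $x,y>0$ with $\psi(x)+\psi(y)\neq2\psi(1)$. *)

(* Defs.v *)
From Stdlib Require Import Reals Lra.
Open Scope R_scope.

(* psi~(x,y) := [psi'(x)+psi'(y)](1-xy) + x[psi(y)-psi(1/x)] + y[psi(x)-psi(1/y)],
   where dpsi plays the role of psi'. *)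
Definition psi_tilde (psi dpsi : R -> R) (x y : R) : R :=
  (dpsi x + dpsi y) * (1 - x * y) + x * (psi y - psi (/ x)) + y * (psi x - psi (/ y)).

Definition C_set (psi dpsi : R -> R) (q : R) : Prop :=
  exists x y : R, 0 < x /\ 0 < y /\ psi x + psi y <> 2 * psi 1 /\
    q = psi_tilde psi dpsi x y / (psi x + psi y - 2 * psi 1) ^ 2.

Definition is_lower_bound (E : R -> Prop) (m : R) : Prop :=
  forall q, E q -> m <= q.

Definition is_glb (E : R -> Prop) (m : R) : Prop :=
  is_lower_bound E m /\ (forall b, is_lower_bound E b -> b <= m).

Definition C_psi_is (psi dpsi : R -> R) (c : R) : Prop :=
  (forall x, 0 < x -> derivable_pt_lim psi x (dpsi x)) /\ is_glb (C_set psi dpsi) c.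

(* Main.v *)
Require Import Defs.
From Stdlib Require Import Reals Lra Psatz.
From Coquelicot Require Import Coquelicot.
Open Scope R_scope.
Lemma ln_le x : 0 < x -> ln x <= x - 1.
Proof. intro H. pose proof (exp_ineq1_le (ln x)). rewrite exp_ln in H0; lra. Qed.
Lemma ln_ge x : 0 < x -> 1 - / x <= ln x.
Proof. intro H. pose proof (ln_le (/x) ltac:(apply Rinv_0_lt_compat; lra)).
rewrite ln_Rinv in H0; lra. Qed.
Lemma k_pos c : 0 < c -> 0 < (c+1)/c + 2 * ln c.
Proof. intro H. set (b := sqrt c). assert (Hb: 0 < b) by (apply sqrt_lt_R0; lra).
assert (Hc: c = b*b) by (unfold b; rewrite sqrt_sqrt; lra).
rewrite Hc, ln_mult by lra. pose proof (ln_ge b Hb).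
set (ib := /b) in *. assert (b*ib = 1) by (unfold ib; field; lra).
replace ((b*b+1)/(b*b)) with (1 + ib*ib) by (unfold ib; field; lra).
pose proof (pow2_ge_0 (ib - 2)). nra. Qed.
Definition h a := / a - a + 2 * a * ln a - ln a * ln a.
Lemma h_der c : 0 < c -> derivable_pt_lim h c ((c-1)/c * ((c+1)/c + 2*ln c)).
Proof. intro H. apply is_derive_Reals. unfold h. auto_derive. repeat split; lra. field. lra. Qed.
Lemma h_nonneg a : 0 < a -> 0 <= h a.
Proof. intro Ha. assert (h1 : h 1 = 0) by (unfold h; rewrite ln_1; lra).
destruct (Rtotal_order a 1) as [Hl|[He|Hg]].
- destruct (MVT_cor2 h (fun c => (c-1)/c * ((c+1)/c + 2*ln c)) a 1 Hl) as [c [E Hc]].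
  intros; apply h_der; lra.
  pose proof (k_pos c ltac:(lra)).
  assert ((c-1)/c <= 0). { unfold Rdiv. apply Rmult_le_0_r. lra. left; apply Rinv_0_lt_compat; lra. }
  assert ((c-1)/c * ((c+1)/c + 2*ln c) <= 0) by (apply Rmult_le_0_r; lra).
  nra.
- subst; lra.
- destruct (MVT_cor2 h (fun c => (c-1)/c * ((c+1)/c + 2*ln c)) 1 a Hg) as [c [E Hc]].
  intros; apply h_der; lra.
  pose proof (k_pos c ltac:(lra)).
  assert (0 <= (c-1)/c). { unfold Rdiv. apply Rmult_le_pos. lra. left; apply Rinv_0_lt_compat; lra. }
  assert (0 <= (c-1)/c * ((c+1)/c + 2*ln c)) by (apply Rmult_le_pos; lra).
  nra.
Qed.

Lemma ln_quot x y : 0 < x -> 0 < y -> ln x + ln y <> 2 * ln 1 ->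
  1/2 <= psi_tilde ln (fun x => / x) x y / (ln x + ln y - 2 * ln 1) ^ 2.
Proof. intros Hx Hy Hn. rewrite ln_1 in *. unfold psi_tilde.
rewrite !ln_Rinv by lra.
set (a := sqrt (x*y)). assert (Ha: 0 < a) by (apply sqrt_lt_R0; nra).
assert (Haa: a*a = x*y) by (unfold a; rewrite sqrt_sqrt; nra).
set (m := ln a).
assert (HL: ln x + ln y = 2*m) by (unfold m; rewrite <- ln_mult by lra; rewrite <- Haa, ln_mult by lra; ring).
rewrite HL. set (ia := /a). assert (Hia: a*ia = 1) by (unfold ia; field; lra).
assert (Hia0: 0 < ia) by (unfold ia; apply Rinv_0_lt_compat; lra).
replace ((/x + /y) * (1 - x*y) + x*(ln y - - ln x) + y*(ln x - - ln y))
  with ((x+y)*(ia*ia - 1 + 2*m)).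
2:{ assert (Hii: ia*ia = /(x*y)) by (rewrite <- Haa; unfold ia; field; lra). rewrite Hii. replace (ln y - - ln x) with (2*m) by lra. replace (ln x - - ln y) with (2*m) by lra.
    field. lra. }
pose proof (h_nonneg a Ha) as H. unfold h in H. fold m ia in H.
assert (HB: 0 <= ia*ia - 1 + 2*m).
{ pose proof (ln_ge (a*a) ltac:(nra)). rewrite ln_mult in H0 by lra. fold m in H0.
  replace (/(a*a)) with (ia*ia) in H0 by (unfold ia; field; lra). lra. }
assert (Hs: 2*a <= x+y). { assert ((x+y)*(x+y) >= (2*a)*(2*a)) by (pose proof (pow2_ge_0 (x-y)); nra). nra. }
assert (Hm: m <> 0) by (intro; apply Hn; lra).
assert (Hp: 0 < (2*m - 2*0)^2) by (replace (2*m-2*0) with (2*m) by ring; apply pow_lt_pos || nra).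
apply Rmult_le_reg_r with ((2*m-2*0)^2). lra.
match goal with |- _ <= ?X / ?P * ?P => replace (X / P * P) with X by (field; lra) end.
assert ((x+y)*(ia*ia-1+2*m) >= 2*a*(ia*ia-1+2*m)) by nra.
assert (2*a*(ia*ia-1+2*m) = 2*(ia - a + 2*a*m)) by (replace (a*(ia*ia)) with ia by nra; nra).
nra.
Qed.
Lemma ln2_gt : 16/25 < ln 2.
Proof.
assert (H1: exp (2/25) <= 25/23).
{ pose proof (exp_ineq1_le (-(2/25))). pose proof (exp_pos (2/25)).
  assert (exp (2/25) * exp (-(2/25)) = 1) by (rewrite <- exp_plus; replace (2/25 + - (2/25)) with 0 by ring; apply exp_0).
  nra. }
assert (E: exp (16/25) = ((exp (2/25) * exp (2/25)) * (exp (2/25) * exp (2/25))) * ((exp (2/25) * exp (2/25)) * (exp (2/25) * exp (2/25)))).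
{ rewrite <- !exp_plus. f_equal. lra. }
pose proof (exp_pos (2/25)).
set (e := exp (2/25)) in *.
assert (e*e <= 625/529) by nra.
assert (0 < e*e) by nra.
assert ((e*e)*(e*e) <= (625/529)*(625/529)) by nra.
assert (0 < (e*e)*(e*e)) by nra.
assert (exp (16/25) < 2) by (rewrite E; nra).
rewrite <- (ln_exp (16/25)). apply ln_increasing. apply exp_pos. lra.
Qed.
Lemma ln_point : psi_tilde ln (fun x => / x) (/4) (/4) / (ln (/4) + ln (/4) - 2 * ln 1) ^ 2 <= 1.
Proof. unfold psi_tilde. rewrite Rinv_inv, ln_Rinv, ln_1 by lra.
replace 4 with (2*2) by ring. rewrite ln_mult by lra. pose proof ln2_gt.
set (L := ln 2) in *.
assert (0 < (- (L + L) + - (L + L) - 2 * 0) ^ 2) by nra.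
apply Rmult_le_reg_r with ((- (L + L) + - (L + L) - 2 * 0) ^ 2). lra.
match goal with |- ?X / ?P * ?P <= _ => replace (X / P * P) with X by (field; lra) end.
field_simplify. nra.
Qed.
Lemma glb_exists (E : R -> Prop) m q0 : E q0 -> is_lower_bound E m ->
  exists c, is_glb E c /\ m <= c /\ c <= q0.
Proof. intros Hq Hm.
destruct (completeness (fun z => E (-z))) as [l [Hub Hl]].
- exists (-m). intros z Hz. apply Hm in Hz. lra.
- exists (-q0). rewrite Ropp_involutive. exact Hq.
- exists (-l). assert (Hlb: is_lower_bound E (-l)).
  { intros q Eq. assert (-q <= l) by (apply Hub; rewrite Ropp_involutive; exact Eq). lra. }
  split; [split|split].
  + exact Hlb.
  + intros b Hb. assert (l <= -b). { apply Hl. intros z Hz. apply Hb in Hz. lra. } lra.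
  + assert (l <= -m). { apply Hl. intros z Hz. apply Hm in Hz. lra. } lra.
  + apply Hlb, Hq.
Qed.
Theorem mainTheorem17 :
  (exists c : R, C_psi_is ln (fun x => / x) c /\ 1 / 2 <= c <= 1) /\
  C_psi_is sqrt (fun x => / (2 * sqrt x)) 0.
Proof. split.
- destruct (glb_exists (C_set ln (fun x => / x)) (1/2)
     (psi_tilde ln (fun x => / x) (/4) (/4) / (ln (/4) + ln (/4) - 2 * ln 1) ^ 2)) as [c [Hc [H1 H2]]].
  + exists (/4), (/4). split; [lra|split;[lra|split;[|reflexivity]]].
    rewrite ln_Rinv, ln_1 by lra. replace 4 with (2*2) by ring. rewrite ln_mult by lra.
    pose proof ln2_gt. lra.
  + intros q [x [y [Hx [Hy [Hn ->]]]]]. apply ln_quot; assumption.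
  + exists c. split; [split|].
    * intros; apply derivable_pt_lim_ln; assumption.
    * exact Hc.
    * pose proof ln_point. lra.
- split. { intros; apply derivable_pt_lim_sqrt; assumption. }
  split.
  + intros q [x [y [Hx [Hy [Hn ->]]]]].
    apply Rmult_le_pos. 2: { left. apply Rinv_0_lt_compat. rewrite <- Rsqr_pow2. apply Rsqr_pos_lt. lra. }

    unfold psi_tilde. set (p := sqrt x). set (q := sqrt y).
    assert (Hp: 0 < p) by (apply sqrt_lt_R0; lra). assert (Hq: 0 < q) by (apply sqrt_lt_R0; lra).
    assert (Ex: x = p*p) by (unfold p; rewrite sqrt_sqrt; lra).
    assert (Ey: y = q*q) by (unfold q; rewrite sqrt_sqrt; lra).
    rewrite !sqrt_inv. fold p q. rewrite Ex, Ey.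
    replace ((/ (2 * p) + / (2 * q)) * (1 - p * p * (q * q)) + p * p * (q - / p) + q * q * (p - / q))
      with ((p+q) * ((1 - p*q)*(1-p*q)) / (2*p*q)) by (field; lra).
    apply Rmult_le_pos; [apply Rmult_le_pos; [lra| apply Rle_0_sqr] | left; apply Rinv_0_lt_compat; nra].
  + intros b Hb. apply Hb. exists 4, (/4). split; [lra|split;[lra|split]].
    * rewrite sqrt_inv, sqrt_1. replace 4 with (2*2) by ring. rewrite sqrt_square by lra.
      intro; assert (/2 = 1/2) by (field); lra.
    * unfold psi_tilde. rewrite Rinv_inv. replace (1 - 4 * / 4) with 0 by field.
      unfold Rdiv. ring.
Qed.
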